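(* Let $K$ be a random string in $\{0,1\}^N$ (with arbitrary distribution), and let $p_1,\dots,p_d\in\{1,\dots,N\}$ be fixed probes. Let $c'$ be a Bernoulli$(1/2)$ random variable and for $S\subseteq\{1,\dots,d\}$ define $c(S) := \bigoplus_{i\in S} K[p_i]$ and $d(S) := \|\mathcal L(c(S)) - \mathcal L(c')\|_{TV}$. If $\mathcal S$ is a uniformly random subset of $\{1,\dots,d\}$, then \[ \mathbb E\big[d(\mathcal S)\big] \le \frac12\sqrt{\sum_{y\in\{0,1\}^d}\mathbb P\big((K[p_1],\dots,K[p_d]) = y\big)^2}. \]
   Context: $K[i]$ denotes the $i$-th bit of $K$. For probability distributions $\mu,\nu$ on a finite set $\Omega$, $\|\mu-\nu\|_{TV} = \frac12\sum_{x\in\Omega}|\mu(x)-\nu(x)|$; $\mathcal L(Z)$ is the law of $Z$. *)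

(* Defs.v *)
From HB Require Import structures.
From mathcomp Require Import all_boot all_order all_algebra.
Set Implicit Arguments. Unset Strict Implicit. Unset Printing Implicit Defensive.
Import Order.TTheory GRing.Theory Num.Theory.
Local Open Scope ring_scope.

Definition is_distr (R : numDomainType) (T : finType) (P : {ffun T -> R}) : Prop :=
  (forall t, 0 <= P t) /\ \sum_(t : T) P t = 1.

Definition law (R : numDomainType) (T U : finType) (P : {ffun T -> R}) (X : T -> U)
  : {ffun U -> R} := [ffun u => \sum_(t : T | X t == u) P t].

Definition tv (R : numFieldType) (U : finType) (mu nu : {ffun U -> R}) : R :=
  2^-1 * \sum_(u : U) `|mu u - nu u|.

Definition bern_half (R : numFieldType) : {ffun bool -> R} := [ffun _ => 2^-1].

(* Strings in {0,1}^N; K[i] is K i, bits indexed by 'I_N (0-based). *)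
Definition bitstring (N : nat) := {ffun 'I_N -> bool}.

Definition cS (N d : nat) (p : 'I_d -> 'I_N) (S : {set 'I_d}) (K : bitstring N) : bool :=
  \big[addb/false]_(i in S) K (p i).

Definition dS (R : numFieldType) (N d : nat) (P : {ffun bitstring N -> R})
  (p : 'I_d -> 'I_N) (S : {set 'I_d}) : R :=
  tv (law P (cS p S)) (bern_half R).

Definition probe (N d : nat) (p : 'I_d -> 'I_N) (K : bitstring N) : {ffun 'I_d -> bool} :=
  [ffun i => K (p i)].

(* Main.v *)
Require Import Defs.
From HB Require Import structures.
From mathcomp Require Import all_boot all_order all_algebra.
From mathcomp Require Import ring lra.
Import Order.TTheory GRing.Theory Num.Theory.
Local Open Scope ring_scope.

Definition sgnb (R : ringType) (b : bool) : R := if b then -1 else 1.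

Lemma sum_prod (R : comRingType) n (s : 'I_n -> R) :
  \sum_(S : {set 'I_n}) \prod_(i in S) s i = \prod_i (1 + s i).
Proof.
under eq_bigr do rewrite addrC.
rewrite bigA_distr; apply: eq_big => [S|S _] //; by rewrite big_mkcond. Qed.

Lemma sgnb_xor (R : ringType) (I : finType) (S : {set I}) (b : I -> bool) :
  sgnb R (\big[addb/false]_(i in S) b i) = \prod_(i in S) sgnb R (b i).
Proof.
apply: (big_morph (sgnb R)) => //.
by move=> [] [] /=; rewrite /sgnb ?mulr1 ?mul1r ?mulrNN ?mulr1 ?mulN1r.
Qed.

Lemma card_sets (R : comNzRingType) n : \sum_(S : {set 'I_n}) (1 : R) = 2 ^+ n.
Proof.
transitivity (\sum_(S : {set 'I_n}) \prod_(i in S) (1:R)).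
  by apply: eq_bigr => S _; rewrite big1_eq.
by rewrite sum_prod prodr_const card_ord.
Qed.

Section Main.
Variables (R : rcfType) (N d : nat) (P : {ffun bitstring N -> R}).
Hypothesis hP : is_distr P.
Variable p : 'I_d -> 'I_N.

Definition F (S : {set 'I_d}) : R := \sum_K P K * sgnb R (cS p S K).

Lemma dS_eq S : dS P p S = 2^-1 * `|F S|.
Proof.
rewrite /dS /tv big_bool /= !ffunE.
set lt := \sum_(K | cS p S K == true) P K.
set lf := \sum_(K | cS p S K == false) P K.
have h1 : lt + lf = 1.
  case: hP => _ <-; rewrite (bigID (fun K => cS p S K == true)) /=.
  congr (_ + _); apply: eq_bigl => K; by case: (cS p S K).
have hF : F S = lf - lt.
  rewrite /F (bigID (fun K => cS p S K == true)) /= addrC; congr (_ + _).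
    by apply: eq_big => K; case: (cS p S K) => //= _; rewrite mulr1.
  rewrite -sumrN; apply: eq_big => K; case: (cS p S K) => //= _.
  by rewrite /sgnb mulrN1.
congr (_ * _); rewrite hF.
have -> : lf = 1 - lt by rewrite -h1; ring.
have -> : 1 - lt - lt = - (2 * (lt - 2^-1)) by field.
have -> : 1 - lt - 2^-1 = - (lt - 2^-1) by field.
rewrite !normrN normrM (ger0_norm (ler0n _ 2)); ring.
Qed.

Let q := law P (probe p).

Lemma prod_eq (K K' : bitstring N) :
  \prod_(i : 'I_d) (1 + sgnb R (K (p i)) * sgnb R (K' (p i)))
  = if probe p K == probe p K' then 2 ^+ d else 0.
Proof.
case: eqP => [/ffunP E|NE].
  rewrite -[in RHS](card_ord d) -prodr_const; apply: eq_bigr => i _.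
  have := E i; rewrite !ffunE => ->.
  by case: (K' (p i)); rewrite /sgnb ?mulrNN mulr1.
have [i Hi] : exists i, K (p i) != K' (p i).
  apply/existsP; apply: contraT; rewrite negb_exists => /forallP H.
  case: NE; apply/ffunP => i; rewrite !ffunE; by apply/eqP; move: (H i); rewrite negbK.
rewrite (bigD1 i) //=.
by move: Hi; case: (K (p i)); case: (K' (p i)) => //= _; rewrite /sgnb ?mulrN1 ?mulN1r ?mulr1 ?subrr mul0r.
Qed.

Lemma parseval : \sum_S F S ^+ 2 = 2 ^+ d * \sum_y q y ^+ 2.
Proof.
transitivity (\sum_(K : bitstring N) \sum_(K' : bitstring N) P K * P K' *
   (if probe p K == probe p K' then 2 ^+ d else 0)).
  transitivity (\sum_(S : {set 'I_d}) \sum_(K : bitstring N) \sum_(K' : bitstring N) P K * P K' *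
     \prod_(i in S) (sgnb R (K (p i)) * sgnb R (K' (p i)))).
    apply: eq_bigr => S _; rewrite expr2 /F mulr_suml; apply: eq_bigr => K _.
    rewrite mulr_sumr; apply: eq_bigr => K' _.
    rewrite big_split /= -!sgnb_xor; ring.
  rewrite exchange_big; apply: eq_bigr => K _.
  rewrite exchange_big; apply: eq_bigr => K' _.
  by rewrite -mulr_sumr sum_prod prod_eq.
transitivity (2 ^+ d * \sum_(K : bitstring N) P K * q (probe p K)).
  rewrite mulr_sumr; apply: eq_bigr => K _.
  rewrite /q /law ffunE mulr_sumr mulr_sumr.
  rewrite [LHS](bigID (fun K' => probe p K' == probe p K)) /=.
  rewrite [X in _ + X = _]big1 ?addr0; last first.
    by move=> K' /negPf H; rewrite eq_sym H mulr0.
  by apply: eq_bigr => K' /eqP ->; rewrite eqxx; ring.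
congr (_ * _).
rewrite (partition_big (probe p) predT) //=; apply: eq_bigr => y _.
rewrite expr2 {1}/q /law ffunE mulr_suml; apply: eq_bigr => K /eqP <-.
by rewrite ffunE.
Qed.
End Main.

Theorem corollary1 (R : rcfType) (N d : nat) (P : {ffun bitstring N -> R})
  (hP : is_distr P) (p : 'I_d -> 'I_N) :
  (2 ^+ d)^-1 * \sum_(S : {set 'I_d}) dS P p S
  <= 2^-1 * Num.sqrt (\sum_(y : {ffun 'I_d -> bool}) (law P (probe p) y) ^+ 2).
Proof.
set n : R := 2 ^+ d.
have n0 : 0 < n by rewrite /n exprn_gt0.
have ni0 : 0 < n^-1 by rewrite invr_gt0.
have nn : n * n^-1 = 1 by rewrite mulfV // gt_eqF.
set T1 := \sum_(S : {set 'I_d}) `|F R N d P p S|.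
set T2 := \sum_(S : {set 'I_d}) F R N d P p S ^+ 2.
set Q := \sum_(y : {ffun 'I_d -> bool}) (law P (probe p) y) ^+ 2.
have HQ : Q = n^-1 * T2 by rewrite /T2 parseval -/n mulrA mulVf ?gt_eqF // mul1r.
have HS : \sum_(S : {set 'I_d}) dS P p S = 2^-1 * T1.
  by rewrite mulr_sumr; apply: eq_bigr => S _; rewrite dS_eq.
rewrite HS HQ mulrCA ler_pM2l ?invr_gt0 ?ltr0n //.
set A := n^-1 * T1.
have A0 : 0 <= A by apply: mulr_ge0; [exact: ltW | apply: sumr_ge0 => S _; exact: normr_ge0].
have T1A : T1 = n * A by rewrite /A mulrA nn mul1r.
have H0 : 0 <= \sum_(S : {set 'I_d}) (`|F R N d P p S| - A) ^+ 2.
  by apply: sumr_ge0 => S _; apply: sqr_ge0.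
have E : \sum_(S : {set 'I_d}) (`|F R N d P p S| - A) ^+ 2 = T2 - 2 * A * T1 + A ^+ 2 * n.
  transitivity (\sum_(S : {set 'I_d}) (F R N d P p S ^+ 2 - 2 * A * `|F R N d P p S| + A ^+ 2 * 1)).
    by apply: eq_bigr => S _; rewrite sqrrB real_normK ?num_real //; ring.
  rewrite !big_split /= sumrN -!mulr_sumr /n -(card_sets R d); congr (_ - _ + _).
have HA : A ^+ 2 <= n^-1 * T2.
  rewrite E T1A in H0.
  have : 0 <= n^-1 * (T2 - n * A ^+ 2).
    apply: mulr_ge0; first exact: ltW.
    suff -> : T2 - n * A ^+ 2 = T2 - 2 * A * (n * A) + A ^+ 2 * n by []. ring.
  rewrite mulrBr mulrA mulVf ?gt_eqF // mul1r; lra.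
rewrite -(ger0_norm A0) -sqrtr_sqr ler_sqrt //.
apply: mulr_ge0; [exact: ltW | apply: sumr_ge0 => S _; exact: sqr_ge0].
Qed.
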